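(* Let $\lambda\supseteq\mu$ be partitions and let $T$ be a Dyck tiling of $\lambda\setminus\mu$. The following nine conditions are equivalent: (1) $T$ is cover-inclusive; (2) whenever $\mathfrak a$ and $\mathtt N(\mathfrak a)$ are both nodes of $\lambda\setminus\mu$, we have $\operatorname{dp}(\mathtt N(\mathfrak a))\ge\operatorname{dp}(\mathfrak a)$; (3) whenever $\mathfrak a$ and $\mathtt N(\mathfrak a)$ are both nodes of $\lambda\setminus\mu$, we have $\operatorname{tile}(\mathfrak a)+(1,1)\subseteq\operatorname{tile}(\mathtt N(\mathfrak a))$; (4) whenever $\mathfrak a$ and $\mathtt N(\mathfrak a)$ are nodes of $\lambda\setminus\mu$ and $\mathfrak a$ is attached to $\mathtt{NW}(\mathfrak a)$, the node $\mathtt{NW}(\mathtt N(\mathfrak a))$ lies in $\lambda\setminus\mu$ and $\mathtt N(\mathfrak a)$ is attached to it; (5) whenever $\mathfrak a$ and $\mathtt N(\mathfrak a)$ are nodes of $\lambda\setminus\mu$ and $\mathtt N(\mathfrak a)$ is the end node of its tile, $\mathfrak a$ is the end node of its tile; (6) $T$ is right-cover-inclusive; (7) whenever $\mathfrak a$ and $\mathtt N(\mathfrak a)$ are nodes of $\lambda\setminus\mu$ and $\mathfrak a$ is attached to $\mathtt{NE}(\mathfrak a)$, the node $\mathtt{NE}(\mathtt N(\mathfrak a))$ lies in $\lambda\setminus\mu$ and $\mathtt N(\mathfrak a)$ is attached to it; (8) whenever $\mathfrak a$ and $\mathtt N(\mathfrak a)$ are nodes of $\lambda\setminus\mu$ and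 $\mathtt N(\mathfrak a)$ is the start node of its tile, $\mathfrak a$ is the start node of its tile; (9) $T$ is left-cover-inclusive.
   Context: A partition $\lambda$ is identified with its Young diagram $\{(a,b)\in\mathbb N^2: b\le\lambda_a\}$ ($\mathbb N=\{1,2,\dots\}$); $\lambda\supseteq\mu$ means $\lambda_i\ge\mu_i$ for all $i$, and $\lambda\setminus\mu$ is the set difference of diagrams. Elements of $\mathbb N^2$ are called nodes. The height of $(a,b)$ is $\operatorname{ht}(a,b)=a+b$, and $(a,b)$ lies in column $b-a$; a node is to the left of another if its column index is smaller. Neighbours of a node $\mathfrak n$: $\mathtt{NE}(\mathfrak n)=\mathfrak n+(0,1)$, $\mathtt{SW}(\mathfrak n)=\mathfrak n-(0,1)$, $\mathtt{NW}(\mathfrak n)=\mathfrak n+(1,0)$, $\mathtt{SE}(\mathfrak n)=\mathfrak n-(1,0)$, $\mathtt N(\mathfrak n)=\mathfrak n+(1,1)$, $\mathtt S(\mathfrak n)=\mathfrak n-(1,1)$. A tile is a finite nonempty set $t$ of nodes that can be ordered $\mathfrak n_1,\dots,\mathfrak n_r$ with $\mathfrak n_{i+1}\in\{\mathtt{NE}(\mathfrak n_i),\mathtt{SE}(\mathfrak n_i)\}$; its start $\operatorname{st}(t)$ is its leftmost node and its end $\operatorname{en}(t)$ its rightmost node; $\operatorname{ht}(t)=\max_{\mathfrak n\in t}\operatorname{ht}(\mathfrak n)$; $t$ is a Dyck tile if $\operatorname{ht}(\operatorname{st}t)=\operatorname{ht}(\operatorname{en}t)=\operatorname{ht}(t)$.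 The depth of $\mathfrak n\in t$ is $\operatorname{dp}(\mathfrak n)=\operatorname{ht}(t)-\operatorname{ht}(\mathfrak n)$. A Dyck tiling of $\lambda\setminus\mu$ is a partition of $\lambda\setminus\mu$ into Dyck tiles; $\operatorname{tile}(\mathfrak n)$ is the tile containing $\mathfrak n$, and $\mathfrak n$ is attached to a neighbour if they lie in the same tile. A Dyck tiling is left-cover-inclusive if whenever $\mathfrak a,\mathtt N(\mathfrak a)\in\lambda\setminus\mu$, $\operatorname{st}(\operatorname{tile}(\mathtt N(\mathfrak a)))$ lies weakly to the left of $\operatorname{st}(\operatorname{tile}(\mathfrak a))$; right-cover-inclusive if whenever $\mathfrak a,\mathtt N(\mathfrak a)\in\lambda\setminus\mu$, $\operatorname{en}(\operatorname{tile}(\mathtt N(\mathfrak a)))$ lies weakly to the right of $\operatorname{en}(\operatorname{tile}(\mathfrak a))$; cover-inclusive if both. *)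

(* Defs.v *)
From mathcomp Require Import all_boot all_order all_algebra.
Import Order.TTheory GRing.Theory Num.Theory.

(* Nodes: pairs (a,b); nodes of diagrams always have a,b >= 1. *)
Definition node := (nat * nat)%type.

(* A partition is a weakly decreasing sequence of naturals
   (trailing zeros allowed); part l a = lambda_a, 1-indexed. *)
Definition is_partition (l : seq nat) : Prop := sorted geq l.
Definition part (l : seq nat) (a : nat) : nat := nth 0 l a.-1.

Definition in_diagram (l : seq nat) (n : node) : Prop :=
  1 <= n.1 /\ 1 <= n.2 /\ n.2 <= part l n.1.

Definition pcontains (l m : seq nat) : Prop :=
  forall a, 1 <= a -> part m a <= part l a.

Definition in_skew (l m : seq nat) (n : node) : Prop :=
  in_diagram l n /\ ~ in_diagram m n.

Definition ht (n : node) : nat := n.1 + n.2.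
Definition col (n : node) : int := (n.2%:Z - n.1%:Z)%R.

Definition NE (n : node) : node := (n.1, n.2.+1).
Definition NW (n : node) : node := (n.1.+1, n.2).
Definition Nn (n : node) : node := (n.1.+1, n.2.+1).

Definition nset := node -> Prop.

(* step relation: y = NE x or y = SE x (i.e. x = NW y) *)
Definition tile_step (x y : node) : bool := (y == NE x) || (x == NW y).

Definition is_tile (t : nset) : Prop :=
  exists s : seq node, s != [::] /\ sorted tile_step s /\
    forall x, t x <-> x \in s.

Definition is_start (t : nset) (n : node) : Prop :=
  t n /\ forall m, t m -> (col n <= col m)%R.
Definition is_end (t : nset) (n : node) : Prop :=
  t n /\ forall m, t m -> (col m <= col n)%R.

Definition tile_ht (t : nset) (h : nat) : Prop :=
  (exists n, t n /\ ht n = h) /\ forall n, t n -> ht n <= h.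

Definition is_dyck_tile (t : nset) : Prop :=
  is_tile t /\
  exists h, tile_ht t h /\
    forall s e, is_start t s -> is_end t e -> ht s = h /\ ht e = h.

Definition dyck_tiling (l m : seq nat) (T : nset -> Prop) : Prop :=
  (forall t, T t -> is_dyck_tile t /\ forall n, t n -> in_skew l m n) /\
  (forall n, in_skew l m n -> exists t, T t /\ t n) /\
  (forall t1 t2 n, T t1 -> T t2 -> t1 n -> t2 n -> forall x, t1 x <-> t2 x).

Definition depth (T : nset -> Prop) (n : node) (d : nat) : Prop :=
  exists t h, T t /\ t n /\ tile_ht t h /\ d = h - ht n.

Definition attached (T : nset -> Prop) (n m : node) : Prop :=
  exists t, T t /\ t n /\ t m.

Definition is_start_of_tile (T : nset -> Prop) (n : node) : Prop :=
  exists t, T t /\ t n /\ is_start t n.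
Definition is_end_of_tile (T : nset -> Prop) (n : node) : Prop :=
  exists t, T t /\ t n /\ is_end t n.

Definition left_cover_inclusive (l m : seq nat) (T : nset -> Prop) : Prop :=
  forall a, in_skew l m a -> in_skew l m (Nn a) ->
  forall t1 t2 s1 s2, T t1 -> t1 (Nn a) -> T t2 -> t2 a ->
    is_start t1 s1 -> is_start t2 s2 -> (col s1 <= col s2)%R.

Definition right_cover_inclusive (l m : seq nat) (T : nset -> Prop) : Prop :=
  forall a, in_skew l m a -> in_skew l m (Nn a) ->
  forall t1 t2 e1 e2, T t1 -> t1 (Nn a) -> T t2 -> t2 a ->
    is_end t1 e1 -> is_end t2 e2 -> (col e2 <= col e1)%R.

Definition cover_inclusive (l m : seq nat) (T : nset -> Prop) : Prop :=
  left_cover_inclusive l m T /\ right_cover_inclusive l m T.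

(* Main.v *)
Require Import Defs.
From mathcomp Require Import all_boot all_order all_algebra zify.
From Stdlib Require Import Classical FunctionalExtensionality PropExtensionality.
Import Order.TTheory GRing.Theory Num.Theory.

Definition cle (x y : node) : Prop := x.2 + y.1 <= y.2 + x.1.
Definition clt (x y : node) : Prop := x.2 + y.1 < y.2 + x.1.

Lemma colle x y : (Defs.col x <= Defs.col y)%R <-> cle x y.
Proof. rewrite /Defs.col /cle. split; lia. Qed.

Lemma ts x y : tile_step x y <-> (y.1 = x.1 /\ y.2 = x.2.+1) \/ (x.1 = y.1.+1 /\ x.2 = y.2).
Proof.
case: x y => [x1 x2] [y1 y2]; rewrite /tile_step /NE /NW /= !xpair_eqE.
split. by case/orP => /andP [/eqP -> /eqP ->]; auto.
by case=> [[-> ->]|[-> ->]]; rewrite !eqxx ?orbT.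
Qed.

Lemma ts_clt x y : tile_step x y -> clt x y.
Proof. move/ts; rewrite /clt; lia. Qed.
Arguments ts_clt {x y}.

Definition starts (t : nset) x := t x /\ forall m, t m -> cle x m.
Definition ends (t : nset) x := t x /\ forall m, t m -> cle m x.

Lemma start_iff t x : is_start t x <-> starts t x.
Proof.
split; case=> h1 h2; split=> // m /h2; apply colle.
Qed.
Lemma end_iff t x : is_end t x <-> ends t x.
Proof.
split; case=> h1 h2; split=> // m /h2; apply colle.
Qed.

Definition GT (t : nset) : Prop :=
  (forall x y, t x -> t y -> cle x y -> cle y x -> x = y) /\
      (forall x, t x -> ends t x \/ exists y, t y /\ tile_step x y) /\
      (forall x, t x -> starts t x \/ exists y, t y /\ tile_step y x) /\
      (exists s, starts t s) /\ (exists e, ends t e) /\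
      exists h, [/\ forall x, t x -> ht x <= h,
                    forall s, starts t s -> ht s = h &
                    forall e, ends t e -> ht e = h].

Lemma path_clt {x s} : path tile_step x s -> forall y, y \in s -> clt x y.
Proof.
elim: s x => [//|z s IH] x /= /andP [hxz hp] y.
rewrite in_cons => /orP [/eqP -> | hy]; first exact: ts_clt.
have := IH _ hp _ hy; have := ts_clt hxz; rewrite /clt; lia.
Qed.

Lemma seq_uniq s : sorted tile_step s ->
  forall x y, x \in s -> y \in s -> cle x y -> cle y x -> x = y.
Proof.
elim: s => [//|z s IH] /= hp x y.
have hs := path_sorted hp.
have hc := path_clt hp.
rewrite !in_cons => /orP [/eqP ->|hx] /orP [/eqP ->|hy] //.
- by move: (hc _ hy); rewrite /clt /cle; lia.
- by move: (hc _ hx); rewrite /clt /cle; lia.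
- exact: IH.
Qed.

Lemma seq_right {s} : sorted tile_step s -> forall x, x \in s ->
  (forall m, m \in s -> cle m x) \/ exists y, y \in s /\ tile_step x y.
Proof.
elim: s => [//|z s IH] /= hp x.
have hs := path_sorted hp.
have hc := path_clt hp.
rewrite in_cons => /orP [/eqP ->|hx].
- case: s hp {IH hs hc} => [|w s] /=.
  + left=> m; rewrite inE => /eqP ->; rewrite /cle; lia.
  + move=> /andP [hzw _]; right; exists w; split=> //; by rewrite !inE eqxx orbT.
- case: (IH hs x hx) => [h|[y [hy hxy]]].
  + left=> m; rewrite in_cons => /orP [/eqP ->|hm]; last exact: h.
    by move: (hc _ hx); rewrite /clt /cle; lia.
  + right; exists y; by rewrite in_cons hy orbT.
Qed.

Lemma seq_left {s} : sorted tile_step s -> forall x, x \in s ->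
  (forall m, m \in s -> cle x m) \/ exists y, y \in s /\ tile_step y x.
Proof.
elim: s => [//|z s IH] /= hp x.
have hs := path_sorted hp.
have hc := path_clt hp.
rewrite in_cons => /orP [/eqP ->|hx].
- left=> m; rewrite in_cons => /orP [/eqP ->|hm]; first by rewrite /cle; lia.
  by move: (hc _ hm); rewrite /clt /cle; lia.
- case: (IH hs x hx) => [h|[y [hy hxy]]].
  + case: s hp hs hc IH hx h => [//|w s] /= /andP [hzw hp'] hs hc IH hx h.
    right; exists z; split; first by rewrite inE eqxx.
    move: hx; rewrite in_cons => /orP [/eqP -> //|hx].
    have := path_clt hp' _ hx; have := h w; rewrite inE eqxx => /(_ isT).
    rewrite /clt /cle; lia.
  + right; exists y; by rewrite in_cons hy orbT.
Qed.

Lemma seq_first {s} : s != [::] -> sorted tile_step s ->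
  exists x, x \in s /\ forall m, m \in s -> cle x m.
Proof.
case: s => [//|z s] _ /= hp; exists z; split; first by rewrite inE eqxx.
move=> m; rewrite in_cons => /orP [/eqP ->|hm]; first by rewrite /cle; lia.
by move: (path_clt hp _ hm); rewrite /clt /cle; lia.
Qed.

Lemma seq_last {s} : s != [::] -> sorted tile_step s ->
  exists x, x \in s /\ forall m, m \in s -> cle m x.
Proof.
elim: s => [//|z s IH] _ /= hp.
have hs := path_sorted hp.
case: s hp hs IH => [|w s] hp hs IH.
- exists z; split; first by rewrite inE eqxx.
  move=> m; rewrite inE => /eqP ->; rewrite /cle; lia.
- case: (IH isT hs) => e [he hm]; exists e; split; first by rewrite in_cons he orbT.
  move=> m; rewrite in_cons => /orP [/eqP ->|hm']; last exact: hm.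
  by move: (path_clt hp _ he); rewrite /clt /cle; lia.
Qed.

Lemma dyck_GT t : is_dyck_tile t -> GT t.
Proof.
case=> [[s [hne [hs hiff]]] [h [[_ hmax] hse]]].
have E : t = (fun x => is_true (x \in s)).
  by apply: functional_extensionality => x; apply: propositional_extensionality.
subst t.
have [s0 [hs0 hs0m]] := seq_first hne hs.
have [e0 [he0 he0m]] := seq_last hne hs.
have hst : starts (fun x => is_true (x \in s)) s0 by [].
have het : ends (fun x => is_true (x \in s)) e0 by [].
split; [|split; [|split; [|split; [|split]]]].
- exact: seq_uniq.
- move=> x hx; case: (seq_right hs _ hx) => [h1|h2]; [left; by split | by right].
- move=> x hx; case: (seq_left hs _ hx) => [h1|h2]; [left; by split | by right].
- by exists s0.
- by exists e0.
- exists h; split.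
  + exact: hmax.
  + move=> x hx; apply: (proj1 (hse x e0 _ _)); [exact/start_iff | exact/end_iff].
  + move=> x hx; apply: (proj2 (hse s0 x _ _)); [exact/start_iff | exact/end_iff].
Qed.


Definition Good (S : node -> Prop) (T : nset -> Prop) (A B : nat) : Prop :=
 (forall x, S x -> 1 <= x.1 /\ 1 <= x.2 /\ x.1 <= A /\ x.2 <= B) /\
 (forall p, S p -> S (Nn p) -> S (NE p) /\ S (NW p)) /\
 (forall t, T t -> GT t /\ forall x, t x -> S x) /\
 (forall x, S x -> exists t, T t /\ t x) /\
 (forall t1 t2 x, T t1 -> T t2 -> t1 x -> t2 x -> forall y, t1 y -> t2 y).

Definition VR (S : node -> Prop) (T : nset -> Prop) q :=
  S q /\ S (Nn q) /\ (exists t, T t /\ t q /\ t (NE q)) /\ exists t', T t' /\ ends t' (Nn q).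
Definition VL (S : node -> Prop) (T : nset -> Prop) q :=
  S q /\ S (Nn q) /\ (exists t, T t /\ t q /\ t (NW q)) /\ exists t', T t' /\ starts t' (Nn q).


Lemma clash S T A B t1 t2 x y z : Good S T A B -> T t1 -> T t2 -> t1 x -> t2 x ->
  t1 y -> t2 z -> cle y z -> cle z y -> y = z.
Proof.
move=> [_ [_ [gT [_ gX]]]] T1 T2 h1 h2 hy hz c1 c2.
have [[u _] _] := gT t2 T2.
apply: u => //; exact: (gX t1 t2 x).
Qed.

Arguments clash {S T A B t1 t2 x y z}.

Lemma newstart S T A B t t' y : Good S T A B -> T t -> t y -> t (NW y) -> T t' ->
  t' (Nn (NW y)) -> ~ t' (Nn y) -> VL S T y.
Proof.
move=> G; have [gB [gC [gT [gE gX]]]] := G.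
move=> Tt ty tny Tt' tp' nty.
have Sy := proj2 (gT t Tt) y ty.
have Sny := proj2 (gT t Tt) _ tny.
have Sp' := proj2 (gT t' Tt') _ tp'.
have SNy : S (Nn y) by have := proj1 (gC _ Sny Sp'); case: y {ty tny tp' nty Sy Sny Sp'}.
split=> //; split=> //; split; first by exists t.
have [t'' [Tt'' ty'']] := gE _ SNy.
exists t''; split=> //.
have [[_ [_ [l1 _]]] _] := gT t'' Tt''.
case: (l1 _ ty'') => // [[w [tw hw]]].
exfalso.
move: hw => /ts; case: y ty tny tp' nty Sy Sny Sp' SNy ty'' => y1 y2 /=.
case: w tw => w1 w2 /= tw ty tny tp' nty Sy Sny Sp' SNy ty''.
rewrite /Nn /NW /= in tny tp' nty ty'' *.
case=> [[e1 e2]|[e1 e2]].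
- have e3 : w2 = y2 by lia.
  subst w1 w2.
  have := clash G Tt'' Tt tw tny ty'' ty; rewrite /cle /=.
  by move=> h; have := h ltac:(lia) ltac:(lia); case; lia.
- subst w1 w2.
  by apply: nty; apply: (gX t'' t' _ Tt'' Tt' tw tp').
Qed.

Arguments newstart {S T A B t t' y}.

Lemma newend S T A B t t' w : Good S T A B -> T t -> t w -> t (NE w) -> T t' ->
  t' (Nn (NE w)) -> ~ t' (Nn w) -> VR S T w.
Proof.
move=> G; have [gB [gC [gT [gE gX]]]] := G.
move=> Tt tw tnw Tt' tp' ntw.
have Sw := proj2 (gT t Tt) w tw.
have Snw := proj2 (gT t Tt) _ tnw.
have Sp' := proj2 (gT t' Tt') _ tp'.
have SNw : S (Nn w) by have := proj2 (gC _ Snw Sp'); case: w {tw tnw tp' ntw Sw Snw Sp'}.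
split=> //; split=> //; split; first by exists t.
have [t'' [Tt'' tw'']] := gE _ SNw.
exists t''; split=> //.
have [[_ [r1 _]] _] := gT t'' Tt''.
case: (r1 _ tw'') => // [[z [tz hz]]].
exfalso.
move: hz => /ts; case: w tw tnw tp' ntw Sw Snw Sp' SNw tw'' => w1 w2 /=.
case: z tz => z1 z2 /= tz tw tnw tp' ntw Sw Snw Sp' SNw tw''.
rewrite /Nn /NE /= in tnw tp' ntw tw'' *.
case=> [[e1 e2]|[e1 e2]].
- subst z1 z2.
  by apply: ntw; apply: (gX t'' t' _ Tt'' Tt' tz tp').
- have e3 : z1 = w1 by lia.
  subst z1 z2.
  have := clash G Tt'' Tt tz tnw tw'' tw; rewrite /cle /=.
  by move=> h; have := h ltac:(lia) ltac:(lia); case; lia.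
Qed.

Arguments newend {S T A B t t' w}.

Lemma walkR S T A B : Good S T A B -> forall n p t t', B + p.1 <= p.2 + n ->
  T t -> T t' -> t p -> t' (Nn p) ->
  (exists q, VR S T q) \/ (exists q, VL S T q /\ clt p q) \/
  (forall x, t x -> cle p x -> t' (Nn x)).
Proof.
move=> G; have [gB [gC [gT [gE gX]]]] := G.
elim=> [|n IH] p t t' hn Tt Tt' tp tp'.
  exfalso; have := gB p (proj2 (gT t Tt) p tp); lia.
have [[u1 [r1 _]] St] := gT t Tt; have [[u1' [r1' _]] St'] := gT t' Tt'.
case: (r1 p tp) => [[_ hpe]|[y [ty hpy]]].
  right; right => x tx hx.
  by have <- : p = x by apply: u1 => //; apply: hpe.
case: (r1' _ tp') => [[_ hend]|[z [tz hz]]].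
- move: hpy => /ts; case: p hn tp tp' hend => p1 p2 /= hn tp tp' hend.
  case: y ty => y1 y2 /= ty [[e1 e2]|[e1 e2]].
  + subst y1 y2; left; exists (p1, p2); split; first exact: St tp.
    split; first exact: St' tp'.
    split; first by exists t.
    by exists t'.
  + subst p1 p2; right; left; exists (y1, y2); split; last by rewrite /clt /=; lia.
    apply: (newstart G Tt ty tp Tt' tp') => h.
    by have := hend _ h; rewrite /cle /Nn /=; lia.
- move: hpy hz => /ts + /ts; case: p hn tp tp' => p1 p2 /= hn tp tp'.
  case: y ty => y1 y2 /= ty; case: z tz => z1 z2 /= tz.
  rewrite /Nn /= in tp' *.
  case=> [[e1 e2]|[e1 e2]]; case=> [[e3 e4]|[e3 e4]].
  + subst y1 y2 z1 z2.
    have := IH (p1, p2.+1) t t' ltac:(simpl; lia) Tt Tt' ty tz.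
    case=> [h|[[q [hq hc]]|h]]; [by left| right; left; exists q; split=> //; move: hc; rewrite /clt /=; lia|].
    right; right=> x tx hx.
    case: (classic (cle x (p1, p2))) => hx2.
      by have <- : (p1, p2) = x by apply: u1.
    by apply: h => //; move: hx hx2; rewrite /cle /=; lia.
  + exfalso; have e5 : z2 = p2.+1 by lia.
    subst y1 y2; have e6 : z1 = p1 by lia. subst z1 z2.
    have := clash G Tt Tt' ty tz tp tp'; rewrite /cle /=.
    by move=> h; have := h ltac:(lia) ltac:(lia); case; lia.
  + subst p1 p2 z1 z2; right; left; exists (y1, y2); split; last by rewrite /clt /=; lia.
    apply: (newstart G Tt ty tp Tt' tp') => h.
    have := clash G Tt' Tt' tz tz h tz; rewrite /cle /Nn /=.
    by move=> h2; have := h2 ltac:(lia) ltac:(lia); case; lia.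
  + subst p1 p2. have e5 : z1 = y1.+1 by lia. subst z1 z2.
    have := IH (y1, y2) t t' ltac:(simpl; lia) Tt Tt' ty tz.
    case=> [h|[[q [hq hc]]|h]]; [by left| right; left; exists q; split=> //; move: hc; rewrite /clt /=; lia|].
    right; right=> x tx hx.
    case: (classic (cle x (y1.+1, y2))) => hx2.
      by have <- : (y1.+1, y2) = x by apply: u1.
    by apply: h => //; move: hx hx2; rewrite /cle /=; lia.
Qed.

Arguments walkR {S T A B}.

Lemma walkL S T A B : Good S T A B -> forall n p t t', p.2 + A <= n + p.1 ->
  T t -> T t' -> t p -> t' (Nn p) ->
  (exists q, VL S T q) \/ (exists q, VR S T q /\ clt q p) \/
  (forall x, t x -> cle x p -> t' (Nn x)).
Proof.
move=> G; have [gB [gC [gT [gE gX]]]] := G.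
elim=> [|n IH] p t t' hn Tt Tt' tp tp'.
  exfalso; have := gB p (proj2 (gT t Tt) p tp); lia.
have [[un [_ [l1 _]]] St] := gT t Tt; have [[u1' [_ [l1' _]]] St'] := gT t' Tt'.
case: (l1 p tp) => [[_ hps]|[w [tw hwp]]].
  right; right => x tx hx.
  by have -> : x = p by apply: un => //; apply: hps.
case: (l1' _ tp') => [[_ hst]|[u [tu hu]]].
- move: hwp => /ts; case: p hn tp tp' hst => p1 p2 /= hn tp tp' hst.
  case: w tw => w1 w2 /= tw [[e1 e2]|[e1 e2]].
  + subst p1 p2; right; left; exists (w1, w2); split; last by rewrite /clt /=; lia.
    apply: (newend G Tt tw tp Tt' tp') => h.
    by have := hst _ h; rewrite /cle /Nn /=; lia.
  + subst w1 w2; left; exists (p1, p2); split; first exact: St tp.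
    split; first exact: St' tp'.
    split; first by exists t.
    by exists t'.
- move: hwp hu => /ts + /ts; case: p hn tp tp' => p1 p2 /= hn tp tp'.
  case: w tw => w1 w2 /= tw; case: u tu => u1 u2 /= tu.
  rewrite /Nn /= in tp' *.
  case=> [[e1 e2]|[e1 e2]]; case=> [[e3 e4]|[e3 e4]].
  + subst p1 p2; have e5 : u2 = w2.+1 by lia. subst u1 u2.
    have := IH (w1, w2) t t' ltac:(simpl; lia) Tt Tt' tw tu.
    case=> [h|[[q [hq hc]]|h]]; [by left| right; left; exists q; split=> //; move: hc; rewrite /clt /=; lia|].
    right; right=> x tx hx.
    case: (classic (cle (w1, w2.+1) x)) => hx2.
      by have -> : x = (w1, w2.+1) by apply: un.
    by apply: h => //; move: hx hx2; rewrite /cle /=; lia.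
  + subst p1 p2 u1 u2; right; left; exists (w1, w2); split; last by rewrite /clt /=; lia.
    apply: (newend G Tt tw tp Tt' tp') => h.
    have := clash G Tt' Tt' tu tu h tu; rewrite /cle /Nn /=.
    by move=> h2; have := h2 ltac:(lia) ltac:(lia); case; lia.
  + exfalso; subst w1 w2; have e5 : u2 = p2 by lia. subst u1 u2.
    have := clash G Tt Tt' tw tu tp tp'; rewrite /cle /=.
    by move=> h; have := h ltac:(lia) ltac:(lia); case; lia.
  + subst w1 w2 u1 u2.
    have := IH (p1.+1, p2) t t' ltac:(simpl; lia) Tt Tt' tw tu.
    case=> [h|[[q [hq hc]]|h]]; [by left| right; left; exists q; split=> //; move: hc; rewrite /clt /=; lia|].
    right; right=> x tx hx.
    case: (classic (cle (p1, p2) x)) => hx2.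
      by have -> : x = (p1, p2) by apply: un.
    by apply: h => //; move: hx hx2; rewrite /cle /=; lia.
Qed.

Arguments walkL {S T A B}.

Lemma VL_VR S T A B : Good S T A B -> forall n q, B + q.1 <= q.2 + n ->
  VL S T q -> exists r, VR S T r.
Proof.
move=> G; have [gB [gC [gT [gE gX]]]] := G.
elim=> [|n IH] q hn [Sq [SNq [[t [Tt [tq tnw]]] [t' [Tt' [tq' hst]]]]]].
  exfalso; have := gB q Sq; lia.
case: (walkR G n.+1 q t t' hn Tt Tt' tq tq') => [//|[[r [hr hc]]|h]].
  apply: (IH r) => //; move: hc hn; rewrite /clt; lia.
exfalso.
have [[_ [_ [_ [_ [[e he] [hh [hmax _ hhe]]]]]]] _] := gT t Tt.
have [[_ [_ [_ [_ [_ [hh' [hmax' hhs' _]]]]]]] _] := gT t' Tt'.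
have tne := h e (proj1 he) ((proj2 he) q tq).
have := hmax' _ tne; have := hhs' _ (conj tq' hst); have := hhe e he.
have := hmax _ tnw.
rewrite /ht /Nn /NW /=; lia.
Qed.

Lemma VR_VL S T A B : Good S T A B -> forall n q, q.2 + A <= n + q.1 ->
  VR S T q -> exists r, VL S T r.
Proof.
move=> G; have [gB [gC [gT [gE gX]]]] := G.
elim=> [|n IH] q hn [Sq [SNq [[t [Tt [tq tnw]]] [t' [Tt' [tq' hend]]]]]].
  exfalso; have := gB q Sq; lia.
case: (walkL G n.+1 q t t' hn Tt Tt' tq tq') => [//|[[r [hr hc]]|h]].
  apply: (IH r) => //; move: hc hn; rewrite /clt; lia.
exfalso.
have [[_ [_ [_ [[s hs] [_ [hh [hmax hhs _]]]]]]] _] := gT t Tt.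
have [[_ [_ [_ [_ [_ [hh' [hmax' _ hhe']]]]]]] _] := gT t' Tt'.
have tns := h s (proj1 hs) ((proj2 hs) q tq).
have := hmax' _ tns; have := hhe' _ (conj tq' hend); have := hhs s hs.
have := hmax _ tnw.
rewrite /ht /Nn /NE /=; lia.
Qed.

Definition P3 (S : node -> Prop) (T : nset -> Prop) :=
  forall a, S a -> S (Nn a) ->
    forall t1 t2, T t1 -> t1 a -> T t2 -> t2 (Nn a) -> forall x, t1 x -> t2 (Nn x).

Arguments VL_VR {S T A B}.
Arguments VR_VL {S T A B}.

Lemma break S T A B : Good S T A B -> ~ P3 S T ->
  (exists q, VR S T q) \/ (exists q, VL S T q).
Proof.
move=> G; have [gB [gC [gT [gE gX]]]] := G.
move=> nP; apply: NNPP => hn; apply: nP => a Sa SNa t1 t2 T1 t1a T2 t2a x t1x.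
case: (walkR G (B + a.1) a t1 t2 ltac:(lia) T1 T2 t1a t2a) => [h|[[q [h _]]|hR]].
  by exfalso; apply: hn; left.
  by exfalso; apply: hn; right; exists q.
case: (walkL G (a.2 + A) a t1 t2 ltac:(lia) T1 T2 t1a t2a) => [h|[[q [h _]]|hL]].
  by exfalso; apply: hn; right.
  by exfalso; apply: hn; left; exists q.
case: (classic (cle a x)) => hx; first exact: hR.
by apply: hL => //; move: hx; rewrite /cle; lia.
Qed.

Arguments break {S T A B}.

Lemma noVR_P3 S T A B : Good S T A B -> (forall q, ~ VR S T q) -> P3 S T.
Proof.
move=> G hn; apply: NNPP => nP.
have [gB _] := G.
case: (break G nP) => [[q hq]|[q hq]]; first exact: hn hq.
have Sq := proj1 hq; have := gB q Sq => hb.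
have [r hr] := VL_VR G (B + q.1) q ltac:(lia) hq.
exact: hn hr.
Qed.

Lemma noVL_P3 S T A B : Good S T A B -> (forall q, ~ VL S T q) -> P3 S T.
Proof.
move=> G hn; apply: NNPP => nP.
have [gB _] := G.
case: (break G nP) => [[q hq]|[q hq]]; last exact: hn hq.
have Sq := proj1 hq; have := gB q Sq => hb.
have [r hr] := VR_VL G (q.2 + A) q ltac:(lia) hq.
exact: hn hr.
Qed.

Arguments noVR_P3 {S T A B}.
Arguments noVL_P3 {S T A B}.


Lemma nth_le_sumn (l : seq nat) i : nth 0 l i <= sumn l.
Proof. elim: l i => [|x l IH] [|i] //=; [lia| have := IH i; lia]. Qed.

Lemma nth_succ_le (l : seq nat) i : sorted geq l -> nth 0 l i.+1 <= nth 0 l i.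
Proof.
elim: l i => [|x l IH] i //= hp.
case: i => [|i] /=.
  by case: l hp {IH} => [|y l] //= /andP [h _].
exact: IH (path_sorted hp).
Qed.

Lemma part_mono {l a} : is_partition l -> 1 <= a -> part l a.+1 <= part l a.
Proof. move=> hp; case: a => [//|a] _; exact: nth_succ_le. Qed.

Lemma goodS {l m T} : is_partition l -> is_partition m -> dyck_tiling l m T ->
  Good (in_skew l m) T (size l) (sumn l).
Proof.
move=> Pl Pm [hT [hE hX]].
split; [|split; [|split; [|split]]].
- move=> [x1 x2] [[/= h1 [h2 h3]] _]; split=> //; split=> //; split.
  + case: (leqP x1 (size l)) => // hlt; move: h3; rewrite /part nth_default /=; lia.
  + have := nth_le_sumn l x1.-1; rewrite /part in h3; lia.
- move=> [p1 p2] [[/= h1 [h2 h3]] hm] [[/= h4 [h5 h6]] hm'].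
  have ml := part_mono Pl h1; have mm := part_mono Pm h1.
  split; split.
  + rewrite /in_diagram /NE /=; lia.
  + move=> [/= h7 [h8 h9]]; apply: hm; rewrite /in_diagram /=; lia.
  + rewrite /in_diagram /NW /=; lia.
  + move=> [/= h7 [h8 h9]]; apply: hm; rewrite /in_diagram /=; lia.
- move=> t Tt; have [hd hs] := hT t Tt; split=> //; exact: dyck_GT.
- exact: hE.
- move=> t1 t2 x T1 T2 h1 h2 y hy; exact: (proj1 (hX t1 t2 x T1 T2 h1 h2 y)).
Qed.

Theorem theorem3p1 (l m : seq nat) (T : nset -> Prop) :
  is_partition l -> is_partition m -> pcontains l m -> dyck_tiling l m T ->
  [<-> cover_inclusive l m T;
       (forall a, in_skew l m a -> in_skew l m (Nn a) ->
          forall d1 d2, depth T (Nn a) d1 -> depth T a d2 -> d2 <= d1);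
       (forall a, in_skew l m a -> in_skew l m (Nn a) ->
          forall t1 t2, T t1 -> t1 a -> T t2 -> t2 (Nn a) ->
          forall x, t1 x -> t2 (Nn x));
       (forall a, in_skew l m a -> in_skew l m (Nn a) -> attached T a (NW a) ->
          in_skew l m (NW (Nn a)) /\ attached T (Nn a) (NW (Nn a)));
       (forall a, in_skew l m a -> in_skew l m (Nn a) ->
          is_end_of_tile T (Nn a) -> is_end_of_tile T a);
       right_cover_inclusive l m T;
       (forall a, in_skew l m a -> in_skew l m (Nn a) -> attached T a (NE a) ->
          in_skew l m (NE (Nn a)) /\ attached T (Nn a) (NE (Nn a)));
       (forall a, in_skew l m a -> in_skew l m (Nn a) ->
          is_start_of_tile T (Nn a) -> is_start_of_tile T a);
       left_cover_inclusive l m T].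
Proof.
move=> Pl Pm _ DT.
have G := goodS Pl Pm DT.
have [gB [gC [gT [gE gX]]]] := G.
set S := in_skew l m.
have h3R : P3 S T -> right_cover_inclusive l m T.
  move=> h a Sa SNa t1 t2 e1 e2 T1 t1a T2 t2a /end_iff [_ he1] /end_iff [te2 _].
  apply/colle; have := he1 _ (h a Sa SNa t2 t1 T2 t2a T1 t1a e2 te2).
  rewrite /cle /Nn /=; lia.
have h3L : P3 S T -> left_cover_inclusive l m T.
  move=> h a Sa SNa t1 t2 s1 s2 T1 t1a T2 t2a /start_iff [_ hs1] /start_iff [ts2 _].
  apply/colle; have := hs1 _ (h a Sa SNa t2 t1 T2 t2a T1 t1a s2 ts2).
  rewrite /cle /Nn /=; lia.
have h32 : P3 S T -> forall a, in_skew l m a -> in_skew l m (Nn a) ->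
          forall d1 d2, depth T (Nn a) d1 -> depth T a d2 -> d2 <= d1.
  move=> h a Sa SNa d1 d2 [t [hh [Tt [tNa [[[n [tn hn]] hmax] ->]]]]].
  move=> [t0 [h0 [T0 [t0a [[[n0 [tn0 hn0]] hmax0] ->]]]]].
  have := hmax _ (h a Sa SNa t0 t T0 t0a Tt tNa n0 tn0).
  have := hmax0 _ t0a.
  move: hn0; rewrite /ht /Nn /=; lia.
have h34 : P3 S T -> forall a, in_skew l m a -> in_skew l m (Nn a) -> attached T a (NW a) ->
          in_skew l m (NW (Nn a)) /\ attached T (Nn a) (NW (Nn a)).
  move=> h a Sa SNa [t0 [T0 [t0a t0n]]].
  have [t' [Tt' tNa]] := gE _ SNa.
  have ht' := h a Sa SNa t0 t' T0 t0a Tt' tNa _ t0n.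
  split; first exact: (proj2 (gT t' Tt') _ ht').
  by exists t'.
have h37 : P3 S T -> forall a, in_skew l m a -> in_skew l m (Nn a) -> attached T a (NE a) ->
          in_skew l m (NE (Nn a)) /\ attached T (Nn a) (NE (Nn a)).
  move=> h a Sa SNa [t0 [T0 [t0a t0n]]].
  have [t' [Tt' tNa]] := gE _ SNa.
  have ht' := h a Sa SNa t0 t' T0 t0a Tt' tNa _ t0n.
  split; first exact: (proj2 (gT t' Tt') _ ht').
  by exists t'.
have h35 : P3 S T -> forall a, in_skew l m a -> in_skew l m (Nn a) ->
          is_end_of_tile T (Nn a) -> is_end_of_tile T a.
  move=> h a Sa SNa [t' [Tt' [tNa /end_iff [_ he]]]].
  have [t0 [T0 t0a]] := gE _ Sa.
  have [[_ [_ [_ [_ [[e [te hee]] _]]]]] _] := gT t0 T0.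
  have := he _ (h a Sa SNa t0 t' T0 t0a Tt' tNa e te) => hc.
  exists t0; split=> //; split=> //; apply/end_iff; split=> // x tx.
  have := hee x tx; move: hc; rewrite /cle /Nn /=; lia.
have h38 : P3 S T -> forall a, in_skew l m a -> in_skew l m (Nn a) ->
          is_start_of_tile T (Nn a) -> is_start_of_tile T a.
  move=> h a Sa SNa [t' [Tt' [tNa /start_iff [_ he]]]].
  have [t0 [T0 t0a]] := gE _ Sa.
  have [[_ [_ [_ [[e [te hee]] _]]]] _] := gT t0 T0.
  have := he _ (h a Sa SNa t0 t' T0 t0a Tt' tNa e te) => hc.
  exists t0; split=> //; split=> //; apply/start_iff; split=> // x tx.
  have := hee x tx; move: hc; rewrite /cle /Nn /=; lia.
have hR3 : right_cover_inclusive l m T -> P3 S T.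
  move=> h; apply: (noVR_P3 G) => q [Sq [SNq [[t [Tt [tq tnq]]] [t' [Tt' [tq' hend]]]]]].
  have [[_ [_ [_ [_ [[e [te hee]] _]]]]] _] := gT t Tt.
  have := h q Sq SNq t' t (Nn q) e Tt' tq' Tt tq (proj2 (end_iff _ _) (conj tq' hend))
    (proj2 (end_iff _ _) (conj te hee)).
  move/colle; have := hee _ tnq; rewrite /cle /Nn /NE /=; lia.
have hL3 : left_cover_inclusive l m T -> P3 S T.
  move=> h; apply: (noVL_P3 G) => q [Sq [SNq [[t [Tt [tq tnq]]] [t' [Tt' [tq' hst]]]]]].
  have [[_ [_ [_ [[e [te hee]] _]]]] _] := gT t Tt.
  have := h q Sq SNq t' t (Nn q) e Tt' tq' Tt tq (proj2 (start_iff _ _) (conj tq' hst))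
    (proj2 (start_iff _ _) (conj te hee)).
  move/colle; have := hee _ tnq; rewrite /cle /Nn /NW /=; lia.
have h23 : (forall a, in_skew l m a -> in_skew l m (Nn a) ->
          forall d1 d2, depth T (Nn a) d1 -> depth T a d2 -> d2 <= d1) -> P3 S T.
  move=> h; apply: (noVR_P3 G) => q [Sq [SNq [[t [Tt [tq tnq]]] [t' [Tt' [tq' hend]]]]]].
  have [[_ [_ [_ [[s hs] [_ [hh [hmax hhs _]]]]]]] _] := gT t Tt.
  have [[_ [_ [_ [_ [_ [hh' [hmax' _ hhe']]]]]]] _] := gT t' Tt'.
  have e' := hhe' _ (conj tq' hend).
  have := h q Sq SNq 0 (hh - ht q).
  have d1 : depth T (Nn q) 0.
    exists t', (ht (Nn q)); split=> //; split=> //; split; last by rewrite subnn.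
    split; first by exists (Nn q).
    by move=> n tn; rewrite e'; apply: hmax'.
  have d2 : depth T q (hh - ht q).
    exists t, hh; split=> //; split=> //; split=> //.
    split=> //; exists s; split; [exact: proj1 hs | exact: hhs].
  move=> /(_ d1 d2); have := hmax _ tnq; rewrite /ht /NE /=; lia.
have h43 : (forall a, in_skew l m a -> in_skew l m (Nn a) -> attached T a (NW a) ->
          in_skew l m (NW (Nn a)) /\ attached T (Nn a) (NW (Nn a))) -> P3 S T.
  move=> h; apply: (noVL_P3 G) => q [Sq [SNq [[t [Tt [tq tnq]]] [t' [Tt' [tq' hst]]]]]].
  have [_ [t'' [T'' [t''a t''b]]]] := h q Sq SNq (ex_intro _ t (conj Tt (conj tq tnq))).
  have := hst _ (gX t'' t' _ T'' Tt' t''a tq' _ t''b).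
  rewrite /cle /Nn /NW /=; lia.
have h73 : (forall a, in_skew l m a -> in_skew l m (Nn a) -> attached T a (NE a) ->
          in_skew l m (NE (Nn a)) /\ attached T (Nn a) (NE (Nn a))) -> P3 S T.
  move=> h; apply: (noVR_P3 G) => q [Sq [SNq [[t [Tt [tq tnq]]] [t' [Tt' [tq' hend]]]]]].
  have [_ [t'' [T'' [t''a t''b]]]] := h q Sq SNq (ex_intro _ t (conj Tt (conj tq tnq))).
  have := hend _ (gX t'' t' _ T'' Tt' t''a tq' _ t''b).
  rewrite /cle /Nn /NE /=; lia.
have h53 : (forall a, in_skew l m a -> in_skew l m (Nn a) ->
          is_end_of_tile T (Nn a) -> is_end_of_tile T a) -> P3 S T.
  move=> h; apply: (noVR_P3 G) => q [Sq [SNq [[t [Tt [tq tnq]]] [t' [Tt' [tq' hend]]]]]].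
  have [t0 [T0 [t0q /end_iff [_ he]]]] := h q Sq SNq
    (ex_intro _ t' (conj Tt' (conj tq' (proj2 (end_iff _ _) (conj tq' hend))))).
  have := he _ (gX t t0 _ Tt T0 tq t0q _ tnq).
  rewrite /cle /NE /=; lia.
have h83 : (forall a, in_skew l m a -> in_skew l m (Nn a) ->
          is_start_of_tile T (Nn a) -> is_start_of_tile T a) -> P3 S T.
  move=> h; apply: (noVL_P3 G) => q [Sq [SNq [[t [Tt [tq tnq]]] [t' [Tt' [tq' hst]]]]]].
  have [t0 [T0 [t0q /start_iff [_ he]]]] := h q Sq SNq
    (ex_intro _ t' (conj Tt' (conj tq' (proj2 (start_iff _ _) (conj tq' hst))))).
  have := he _ (gX t t0 _ Tt T0 tq t0q _ tnq).
  rewrite /cle /NW /=; lia.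
tfae.
- move=> [_ hr]; exact: h32 (hR3 hr).
- by move=> h; apply: h23.
- by move=> h; apply: h34.
- by move=> h; apply: h35 (h43 h).
- by move=> h; apply: h3R (h53 h).
- by move=> h; apply: h37 (hR3 h).
- by move=> h; apply: h38 (h73 h).
- by move=> h; apply: h3L (h83 h).
- by move=> h; split; [exact: h | apply: h3R; apply: hL3].
Qed.
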